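(* Let $(t_j^i)_{0\le j\le i}$ be real numbers and let $h_{j,k}^i$ ($0\le k\le i$, $0\le j\le i-k$) be defined by $h_{j,0}^i=t_j^i$ and $h_{j,k}^i=h_{j,k-1}^{i-1}+h_{j,k-1}^{i}+h_{j+1,k-1}^{i}$ for $k\ge 1$. Suppose that $t^i_{j}=t^{i-1}_{j-1}+t^{i-1}_{j}$ whenever $i\ge 2$ and $1\leq j\leq i-1$. Then for any $i,j,k$ with $0\leq k+2 \leq i$ and $1\leq j \leq i-1-k$, $$h^i_{j,k}=h^{i-1}_{j-1,k}+h^{i-1}_{j,k}.$$ *)

(* Defs.v *)
From Stdlib Require Import Reals Lra Lia.
Open Scope R_scope.

(* The function is total; on the paper's domain (0<=k<=i, 0<=j<=i-k) every
   recursive call stays inside the domain, so it agrees with the paper. *)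
Fixpoint h (t : nat -> nat -> R) (i j k : nat) {struct k} : R :=
  match k with
  | O => t i j
  | S k' => h t (i - 1)%nat j k' + h t i j k' + h t i (S j) k'
  end.

(* Main.v *)
Require Import Defs.
From Stdlib Require Import Reals Lra Lia.
Open Scope R_scope.

Theorem theorem4 (t : nat -> nat -> R)
  (Ht : forall i j : nat, (2 <= i)%nat -> (1 <= j)%nat -> (j <= i - 1)%nat ->
        t i j = t (i - 1)%nat (j - 1)%nat + t (i - 1)%nat j) :
  forall i j k : nat, (k + 2 <= i)%nat -> (1 <= j)%nat -> (j <= i - 1 - k)%nat ->
    h t i j k = h t (i - 1)%nat (j - 1)%nat k + h t (i - 1)%nat j k.
Proof.
  intros i j k; revert i j.
  induction k as [|k IH]; intros i j H1 H2 H3.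
  - simpl. apply Ht; lia.
  - destruct i as [|[|i]]; try lia. destruct j as [|j]; try lia.
    simpl h.
    rewrite (IH (S (S i)) (S j)) by lia.
    rewrite (IH (S (S i)) (S (S j))) by lia.
    rewrite (IH (S (S i) - 1)%nat (S j)) by lia.
    replace (S (S i) - 1)%nat with (S i) by lia.
    replace (S (S i) - 1 - 1)%nat with i by lia.
    replace (S i - 1)%nat with i by lia.
    replace (S j - 1)%nat with j by lia.
    replace (S (S j) - 1)%nat with (S j) by lia.
    simpl. replace (i - 0)%nat with i by lia. replace (j - 0)%nat with j by lia. lra.
Qed.
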